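(* Let $\mathcal{S}=(X,\xrightarrow{\Sigma},\le)$ be a very-WSTS and $I_0\in\mathrm{Idl}(X)$, and let $c,d$ be nodes of $\mathcal{T}_{I_0}$. (1) If $d$ is reachable from $c$ along arcs of $\mathcal{T}_{I_0}$ (i.e. $d$ is a descendant of $c$ or $c$ itself) and $\mathrm{ideal}(c)=\mathrm{ideal}(d)$, then $\mathrm{numaccel}(c)=\mathrm{numaccel}(d)$. (2) If $d$ is reachable from $c$ in the stuttering automaton $\mathcal{A}_{I_0}$, then $\mathrm{numaccel}(c)\le\mathrm{numaccel}(d)$.
   Context: A (labeled, ordered) transition system is $\mathcal{S}=(X,\xrightarrow{\Sigma},\le)$: $X$ a set, $\Sigma$ a finite alphabet, $\xrightarrow{a}\subseteq X\times X$, $\le$ a quasi-ordering; relations extend to words. $\mathrm{Post}(x,a)=\{y:x\xrightarrow{a}y\}$, extended to sets by union; $\downarrow D=\{x:\exists y\in D,\,x\le y\}$. WSTS: $\le$ a wqo and $x\xrightarrow{a}y$, $x'\ge x$ imply $x'\xrightarrow{w}y'\ge y$ for some $w$. Strong monotonicity: $x\xrightarrow{a}y$, $x'\ge x$ imply $x'\xrightarrow{a}y'$ with $y'\ge y$; strong-strict: additionally $x'>x$ gives $y'>y$. Deterministic: at most one $a$-successor. Ideals: nonempty downward-closed directed subsets, set $\mathrm{Idl}(X)$. Completion $\widehat{\mathcal{S}}=(\mathrm{Idl}(X),\Rightarrow_\Sigma,\subseteq)$ with $I\xRightarrow{a}J$ iff $J$ is a $\subseteq$-maximal ideal included in $\downarrow\mathrm{Post}(I,a)$;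 if deterministic, $w(I)$ is the unique $J$ with $I\xRightarrow{w}J$, when defined. $w^\infty(I)=\bigcup_kw^k(I)$ if $I\subset w(I)$, else $I$ ($w\in\Sigma^+$). Levels: $\mathrm{Idl}_0(X)=\mathrm{Idl}(X)$, $\mathrm{Idl}_n(X)$ = unions of strictly increasing sequences in $\mathrm{Idl}_{n-1}(X)$; finitely many levels if some $\mathrm{Idl}_n(X)=\emptyset$. Very-WSTS: WSTS with strong monotonicity whose completion is a deterministic WSTS ($\subseteq$ a wqo on ideals) with strong-strict monotonicity, and $\mathrm{Idl}(X)$ has finitely many levels. Ideal Karp-Miller algorithm on input $(\mathcal{S},I_0)$ (terminates for very-WSTS): builds a tree with node labels $(\mathrm{ideal}(c),\mathrm{numaccel}(c))\in\mathrm{Idl}(X)\times\mathbb{N}$ and letter-labeled arcs, starting with root $(I_0,0)$. While a node $c:(I,n)$ is unmarked: if a proper ancestor has ideal $I$, mark $c$; otherwise, if a proper ancestor $c'$ has $\mathrm{ideal}(c')\subset I$ and $\mathrm{numaccel}(c')=n$, relabel $c$ by $(w^\infty(I),n+1)$ with $w$ the arc-label word from $c'$ to $c$; then, with $(I,n)$ the current label, add for each $a\in\Sigma$ with $a(I)$ defined a child $(a(I),n)$ via an $a$-arc; mark $c$. $\mathcal{T}_{I_0}$ is the returned tree. The stuttering automaton $\mathcal{A}_{I_0}$ has the nodes of $\mathcal{T}_{I_0}$ as states, the arcs of $\mathcal{T}_{I_0}$ as transitions, plus an $\varepsilon$-transition from each leaf $c$ to any ancestor $c'$ with $\mathrm{ideal}(c')=\mathrm{ideal}(c)$.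 *)

(* Defs.v *)
From mathcomp Require Import all_boot.
From Stdlib Require Import Relations.
Set Implicit Arguments. Unset Strict Implicit. Unset Printing Implicit Defensive.

Section Defs.
Variables (X : Type) (Sigma : finType) (step : Sigma -> X -> X -> Prop)
          (le : X -> X -> Prop).

Fixpoint step_word (w : seq Sigma) (x y : X) : Prop :=
  match w with
  | [::] => x = y
  | a :: w' => exists z, step a x z /\ step_word w' z y
  end.

Definition lt (x y : X) := le x y /\ ~ le y x.

Definition quasi_order := (forall x, le x x) /\ (forall x y z, le x y -> le y z -> le x z).
Definition wqo := quasi_order /\
  forall f : nat -> X, exists i j, (i < j)%N /\ le (f i) (f j).

Definition is_WSTS := wqo /\
  forall a x y x', step a x y -> le x x' -> exists w y', step_word w x' y' /\ le y y'.

Definition strong_monotone :=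
  forall a x y x', step a x y -> le x x' -> exists y', step a x' y' /\ le y y'.

Definition subset (I J : X -> Prop) := forall x, I x -> J x.
Definition ssubset (I J : X -> Prop) := subset I J /\ I <> J.
Definition downclose (D : X -> Prop) : X -> Prop := fun x => exists y, D y /\ le x y.

Definition is_ideal (I : X -> Prop) :=
  (exists x, I x) /\ (forall x y, I y -> le x y -> I x) /\
  (forall x y, I x -> I y -> exists z, I z /\ le x z /\ le y z).

Definition Post (I : X -> Prop) (a : Sigma) : X -> Prop :=
  fun y => exists x, I x /\ step a x y.

Definition cstep (a : Sigma) (I J : X -> Prop) :=
  is_ideal I /\ is_ideal J /\ subset J (downclose (Post I a)) /\
  forall J', is_ideal J' -> subset J' (downclose (Post I a)) -> subset J J' -> subset J' J.

Fixpoint cword (w : seq Sigma) (I J : X -> Prop) : Prop :=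
  match w with
  | [::] => I = J
  | a :: w' => exists K, cstep a I K /\ cword w' K J
  end.

Definition c_deterministic := forall a I J J', cstep a I J -> cstep a I J' -> J = J'.

Definition c_wqo := forall f : nat -> (X -> Prop), (forall k, is_ideal (f k)) ->
  exists i j, (i < j)%N /\ subset (f i) (f j).

Definition c_monotone := forall a I J I', cstep a I J -> is_ideal I' -> subset I I' ->
  exists w J', cword w I' J' /\ subset J J'.

Definition c_strong_strict := forall a I J I', cstep a I J -> is_ideal I' -> subset I I' ->
  exists J', cstep a I' J' /\ subset J J' /\ (ssubset I I' -> ssubset J J').

Fixpoint level (n : nat) : (X -> Prop) -> Prop :=
  match n with
  | 0 => is_ideal
  | n'.+1 => fun I => exists f : nat -> (X -> Prop),
      (forall k, level n' (f k)) /\ (forall k, ssubset (f k) (f k.+1)) /\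
      (forall x, I x <-> exists k, f k x)
  end.

Definition finitely_many_levels := exists n, forall I, ~ level n I.

Definition very_WSTS :=
  is_WSTS /\ strong_monotone /\ c_deterministic /\ c_wqo /\ c_monotone /\
  c_strong_strict /\ finitely_many_levels.

(* w^infty(I) : union of the (defined) w^k(I) if I is strictly below w(I), else I *)
Definition accel (w : seq Sigma) (I : X -> Prop) : X -> Prop :=
  fun x =>
    ((exists J, cword w I J /\ ssubset I J) /\
       exists k J, cword (flatten (nseq k w)) I J /\ J x)
    \/ (~ (exists J, cword w I J /\ ssubset I J) /\ I x).

Definition label := ((X -> Prop) * nat)%type.

(* Nodes are identified with the arc-label words from the root;
   [ini w] is the label node w receives at creation, [lab w] its final label. *)
Definition IKM_tree (I0 : X -> Prop) (node : seq Sigma -> Prop)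
    (ini lab : seq Sigma -> label) : Prop :=
  node [::] /\ ini [::] = (I0, 0) /\
  (forall w a, node (rcons w a) ->
     node w /\ cstep a (lab w).1 (ini (rcons w a)).1 /\ (ini (rcons w a)).2 = (lab w).2) /\
  (forall w, node w ->
     ((exists u v, w = u ++ v /\ v <> [::] /\ (lab u).1 = (ini w).1) ->
        lab w = ini w /\ forall a, ~ node (rcons w a)) /\
     (~ (exists u v, w = u ++ v /\ v <> [::] /\ (lab u).1 = (ini w).1) ->
        ((exists u v, w = u ++ v /\ v <> [::] /\ ssubset (lab u).1 (ini w).1 /\
             (lab u).2 = (ini w).2 /\ lab w = (accel v (ini w).1, (ini w).2.+1))
         \/ (~ (exists u v, w = u ++ v /\ v <> [::] /\ ssubset (lab u).1 (ini w).1 /\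
                   (lab u).2 = (ini w).2) /\ lab w = ini w))
        /\ forall a J, cstep a (lab w).1 J -> node (rcons w a))).

Definition is_leaf (node : seq Sigma -> Prop) (w : seq Sigma) :=
  node w /\ forall a, ~ node (rcons w a).

Definition aut_step (node : seq Sigma -> Prop) (lab : seq Sigma -> label) (c d : seq Sigma) :=
  node c /\ node d /\
  ((exists a, d = rcons c a) \/
   (is_leaf node c /\ (exists v, c = d ++ v) /\ (lab d).1 = (lab c).1)).

End Defs.

(* Main.v *)
Require Import Defs.
From mathcomp Require Import all_boot.
From Stdlib Require Import Relations.
From Stdlib Require Import Classical FunctionalExtensionality PropExtensionality.
From mathcomp Require classical_sets.
From mathcomp Require Import zify.

Set Implicit Arguments. Unset Strict Implicit.
Section Aux.
Variables (X : Type) (Sigma : finType) (step : Sigma -> X -> X -> Prop)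
          (le : X -> X -> Prop).

Lemma pext (P Q : X -> Prop) : (forall x, P x <-> Q x) -> P = Q.
Proof.
move=> h; apply: functional_extensionality => x; apply: propositional_extensionality; exact: h.
Qed.

Lemma cword_cat u w I J : cword step le (u ++ w) I J <->
  exists K, cword step le u I K /\ cword step le w K J.
Proof.
elim: u I => [|a u IH] I /=.
  by split; [move=> h; exists I | move=> [K [-> h]]].
split.
  move=> [K [hK /IH [L [h1 h2]]]]; exists L; split=> //; by exists K.
move=> [L [[K [hK h1]] h2]]; exists K; split=> //; apply/IH; by exists L.
Qed.

Hypothesis Hqo : quasi_order le.
Hypothesis Hdet : c_deterministic step le.
Hypothesis Hss : c_strong_strict step le.

Lemma cword_det w I J J' : cword step le w I J -> cword step le w I J' -> J = J'.
Proof.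
elim: w I => [|a w IH] I /=; first by move=> <- <-.
move=> [K [h1 h2]] [K' [h1' h2']]; move: h2; rewrite (Hdet h1 h1') => h2.
exact: IH h2 h2'.
Qed.

Lemma cword_ss w I J I' : cword step le w I J -> is_ideal le I' -> Defs.subset I I' ->
  exists J', cword step le w I' J' /\ Defs.subset J J' /\ (ssubset I I' -> ssubset J J').
Proof.
elim: w I J I' => [|a w IH] I J I' /=.
  move=> -> hI' hs; exists I'; split=> //.
move=> [K [hK hw]] hI' hs.
have [K' [hK' [hsK hst]]] := Hss hK hI' hs.
have [J' [h1 [h2 h3]]] := IH K J K' hw (proj1 (proj2 hK')) hsK.
exists J'; split; first by exists K'.
split=> // st; apply: h3; exact: hst.
Qed.

Lemma chain_mono (f : nat -> X -> Prop) : (forall k, ssubset (f k) (f k.+1)) ->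
  forall i j, i <= j -> Defs.subset (f i) (f j).
Proof.
move=> hs i j /subnK <-; elim: (j - i) => [|d IH] x hx //=.
rewrite addSn; apply: (proj1 (hs _)); exact: IH.
Qed.

Lemma level_ideal n I : level le n I -> is_ideal le I.
Proof.
elim: n I => [|n IH] I //= [f [hf [hs hI]]]; have hs0 := @chain_mono f hs.
have hfi k : is_ideal le (f k) by apply: IH.
have mono := hs0.
split; [|split].
- have [[x hx] _] := hfi 0; exists x; apply/hI; by exists 0.
- move=> x y /hI [k hk] hxy; apply/hI; exists k.
  have [_ [hd _]] := hfi k; exact: hd hk hxy.
- move=> x y /hI [i hx] /hI [j hy].
  have hx' : f (maxn i j) x by apply: (mono i); [exact: leq_maxl|].
  have hy' : f (maxn i j) y by apply: (mono j); [exact: leq_maxr|].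
  have [_ [_ hdir]] := hfi (maxn i j).
  have [z [hz [h1 h2]]] := hdir _ _ hx' hy'.
  exists z; split=> //; apply/hI; by exists (maxn i j).
Qed.

Lemma level_down n I : level le n.+1 I -> level le n I.
Proof.
elim: n I => [|n IH] I; first exact: (@level_ideal 1).
move=> [f [hf [hs hI]]]; exists f; split=> //; move=> k; exact: IH.
Qed.

Lemma cstep_ideal a I J : cstep step le a I J -> is_ideal le J.
Proof. by move=> [_ [h _]]. Qed.

(* existence of a maximal ideal, via Zorn *)
Lemma key a F z y : is_ideal le F -> F z -> step a z y ->
  exists K, cstep step le a F K /\ K y.
Proof.
move=> hF hz hzy; have [hrefl htrans] := Hqo.
pose D := downclose le (Post step F a).
pose P := fun K : X -> Prop => Defs.subset K D /\ (forall x y, K y -> le x y -> K x) /\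
  (forall x y, K x -> K y -> exists z, K z /\ le x z /\ le y z) /\
  (K y \/ forall x, ~ K x).
have Zc : forall G : classical_sets.set (classical_sets.set X),
    classical_sets.subset G P -> classical_sets.total_on G classical_sets.subset ->
    P (classical_sets.bigcup G id).
  move=> G hGP htot; split; [|split; [|split]].
  - move=> x [K hK hx]; exact: (proj1 (hGP K hK)).
  - move=> x x' [K hK hx] hle; exists K => //; exact: (proj1 (proj2 (hGP K hK))) hx hle.
  - move=> x x' [K hK hx] [K' hK' hx'].
    have [hs|hs] := htot K K' hK hK'.
    + have [w [hw hw']] := proj1 (proj2 (proj2 (hGP K' hK'))) x x' (hs x hx) hx'.
      exists w; split=> //; by exists K'.
    + have [w [hw hw']] := proj1 (proj2 (proj2 (hGP K hK))) x x' hx (hs x' hx').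
      exists w; split=> //; by exists K.
  - case: (classic (exists K, G K /\ K y)) => [[K [hK hKy]]|hno].
      by left; exists K.
    right=> x [K hK hx]; case: (proj2 (proj2 (proj2 (hGP K hK)))) => [hKy|hn].
      by apply: hno; exists K.
    exact: hn hx.
have [A [hPA hmax]] := classical_sets.Zorn_bigcup Zc.
have hdy : P (fun x => le x y).
  split; [|split; [|split]].
  - move=> x hx; exists y; split=> //; by exists z.
  - move=> x x' hx' hle; exact: htrans hle hx'.
  - move=> x x' hx hx'; exists y; split=> //; split=> //.
  - by left.
have hAy : A y.
  case: (proj2 (proj2 (proj2 hPA))) => // hn.
  exfalso; apply: (hmax _ _ hdy); split.
    by move=> x hx; exfalso; exact: hn hx.
  move=> h; exact: hn (h y (hrefl y)).
exists A; split=> //.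
have [hAD [hAdown [hAdir _]]] := hPA.
split=> //; split; first by split; [exists y|split].
split=> // J' hJ' hJ'D hAJ'.
apply: NNPP => hn; apply: (hmax J'); first by split.
have [_ [hd hdir]] := hJ'.
split=> //; split=> //; split=> //; left; exact: hAJ'.
Qed.

Lemma cstep_level n a I J : cstep step le a I J -> level le n I -> level le n J.
Proof.
elim: n a I J => [|n IHn] a I J hc; first by move=> _; exact: (proj1 (proj2 hc)).
move=> [f [hf [hs hI]]].
have mono := @chain_mono f hs.
have hfi k : is_ideal le (f k) := @level_ideal n _ (hf k).
have [hIid [hJid [hJD hJmax]]] := hc.
have [[x0 hx0] _] := hJid.
have [y0 [[z0 [hz0 hst0]] _]] := hJD x0 hx0.
have [k0 hk0] := proj1 (hI z0) hz0.
pose h := fun k x => exists K, cstep step le a (f (k + k0)) K /\ K x.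
have hex k : exists K, cstep step le a (f (k + k0)) K /\ h k = K.
  have hz' : f (k + k0) z0 by apply: (mono k0); [exact: leq_addl|].
  have [K [hK _]] := @key a _ _ _ (hfi _) hz' hst0.
  exists K; split=> //; apply: pext => x; split.
    by move=> [K' [hK' hx]]; rewrite (Hdet hK hK').
  by move=> hx; exists K.
exists h; split; [|split].
- move=> k; have [K [hK ->]] := hex k; exact: IHn hK (hf _).
- move=> k; have [K [hK ->]] := hex k; have [K' [hK' ->]] := hex k.+1.
  have hsub : ssubset (f (k + k0)) (f (k.+1 + k0)) by rewrite addSn; exact: hs.
  have [K'' [hK'' [h1 h2]]] := Hss hK (hfi _) (proj1 hsub).
  rewrite -(Hdet hK'' hK'); exact: h2.
- move=> x; split.
  + move=> hx; have [y [[z [hz hst]] hxy]] := hJD x hx.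
    have [m hm] := proj1 (hI z) hz.
    have hz' : f (m + k0) z by apply: (mono m); [exact: leq_addr|].
    have [K [hK hKy]] := @key a _ _ _ (hfi _) hz' hst.
    exists m, K; split=> //; have [_ [hd _]] := @cstep_ideal a _ _ hK; exact: hd hKy hxy.
  + move=> [k [K [hK hx]]].
    have hsub : Defs.subset (f (k + k0)) I by move=> w hw; apply/hI; exists (k + k0).
    have [J' [hJ' [h1 _]]] := Hss hK hIid hsub.
    rewrite (Hdet hc hJ'); exact: h1.
Qed.

Lemma cword_level n w I J : cword step le w I J -> level le n I -> level le n J.
Proof.
elim: w I => [|a w IH] I /=; first by move=> <-.
move=> [K [hK hw]] hl; apply: (IH K hw); exact: cstep_level hK hl.
Qed.

Lemma flatten_nseqS k (v : seq Sigma) :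
  flatten (nseq k.+1 v) = flatten (nseq k v) ++ v.
Proof.
elim: k => [|k IH]; first by rewrite /= cats0.
change (v ++ flatten (nseq k.+1 v) = (v ++ flatten (nseq k v)) ++ v).
by rewrite IH catA.
Qed.

Lemma accel_jump n v I : level le n I ->
  (exists R, cword step le v I R /\ ssubset I R) -> level le n.+1 (accel step le v I).
Proof.
move=> hl hcond.
have chainJ : forall k, exists Jk, cword step le (flatten (nseq k v)) I Jk /\ level le n Jk /\
    exists Jk1, cword step le v Jk Jk1 /\ ssubset Jk Jk1.
  elim=> [|k [Jk [h1 [h2 [Jk1 [h3 h4]]]]]]; first by exists I; split.
  exists Jk1; split; first by rewrite flatten_nseqS; apply/cword_cat; exists Jk.
  split; first exact: cword_level h3 h2.
  have hJk1 : is_ideal le Jk1 by apply: (@level_ideal n); exact: cword_level h3 h2.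
  have [J2 [h5 [_ h6]]] := cword_ss h3 hJk1 (proj1 h4).
  exists J2; split=> //; exact: h6.
pose g := fun k x => exists J, cword step le (flatten (nseq k v)) I J /\ J x.
have g_eq : forall k Jk, cword step le (flatten (nseq k v)) I Jk -> g k = Jk.
  move=> k Jk hk; apply: pext => x; split.
    by move=> [J [hJ hx]]; rewrite (cword_det hk hJ).
  by move=> hx; exists Jk.
exists g; split; [|split].
- move=> k; have [Jk [h1 [h2 _]]] := chainJ k; by rewrite (g_eq _ _ h1).
- move=> k; have [Jk [h1 [_ [Jk1 [h3 h4]]]]] := chainJ k.
  have h5 : cword step le (flatten (nseq k.+1 v)) I Jk1.
    by rewrite flatten_nseqS; apply/cword_cat; exists Jk.
  by rewrite (g_eq _ _ h1) (g_eq _ _ h5).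
- move=> x; rewrite /accel; split.
    by move=> [[_ [k [J [h1 h2]]]]|[hn _]]; [exists k, J | exfalso; exact: hn].
  by move=> [k [J [h1 h2]]]; left; split=> //; exists k, J.
Qed.

Lemma accel_dom n v I : level le n I -> level le n (accel step le v I).
Proof.
move=> hl; case: (classic (exists R, cword step le v I R /\ ssubset I R)) => hc.
  exact: level_down (accel_jump hl hc).
have -> : accel step le v I = I.
  apply: pext => x; rewrite /accel; split.
    by move=> [[h _]|[_ h]] //; exfalso; exact: hc.
  by move=> hx; right.
exact: hl.
Qed.

Variables (I0 : X -> Prop) (node : seq Sigma -> Prop) (ini lab : seq Sigma -> label X).
Hypothesis HT : IKM_tree step le I0 node ini lab.

Lemma tree_child w a : node (rcons w a) ->
  node w /\ cstep step le a (lab w).1 (ini (rcons w a)).1 /\ (ini (rcons w a)).2 = (lab w).2.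
Proof. by have [_ [_ [hc _]]] := HT; apply: hc. Qed.

Lemma tree_prefix v c : node (c ++ v) -> node c.
Proof.
elim/last_ind: v => [|v a IH]; first by rewrite cats0.
rewrite -rcons_cat => /tree_child [h _]; exact: IH.
Qed.

Lemma tree_class w : node w -> lab w = ini w \/
  exists u v, w = u ++ v /\ v <> [::] /\ ssubset (lab u).1 (ini w).1 /\
    (lab u).2 = (ini w).2 /\ lab w = (accel step le v (ini w).1, (ini w).2.+1).
Proof.
move=> hw; have [_ [_ [_ hn]]] := HT; have [hm hnm] := hn w hw.
case: (classic (exists u v, w = u ++ v /\ v <> [::] /\ (lab u).1 = (ini w).1)) => hc.
  by left; exact: (proj1 (hm hc)).
have [[[u [v [h1 [h2 [h3 [h4 h5]]]]]]|[_ h]] _] := hnm hc.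
  by right; exists u, v.
by left.
Qed.

Lemma ini_lab2 w : node w -> (ini w).2 <= (lab w).2.
Proof.
move=> /tree_class [->//|[u [v [_ [_ [_ [_ ->]]]]]]] /=; exact: leqnSn.
Qed.

Lemma infl_dom n w : node w -> level le n (ini w).1 -> level le n (lab w).1.
Proof.
move=> /tree_class [->//|[u [v [_ [_ [_ [_ ->]]]]]]] /= hl; exact: accel_dom.
Qed.

Lemma mono v c : node (c ++ v) -> (lab c).2 <= (lab (c ++ v)).2.
Proof.
elim/last_ind: v => [|v a IH]; first by rewrite cats0.
rewrite -rcons_cat => hn; have [h1 [_ h3]] := tree_child hn.
apply: leq_trans (IH h1) _; rewrite -h3; exact: ini_lab2.
Qed.

Lemma path_dom n v c : node (c ++ v) -> level le n (lab c).1 -> level le n (lab (c ++ v)).1.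
Proof.
elim/last_ind: v => [|v a IH]; first by rewrite cats0.
rewrite -rcons_cat => hn hl; have [h1 [h2 _]] := tree_child hn.
apply: infl_dom => //; apply: cstep_level h2 _; exact: IH.
Qed.

Lemma pure v u : v <> [::] -> node (u ++ v) -> (lab u).2 = (ini (u ++ v)).2 ->
  cword step le v (lab u).1 (ini (u ++ v)).1.
Proof.
elim/last_ind: v => [//|p b IH] _.
rewrite -rcons_cat => hn heq; have [h1 [h2 h3]] := tree_child hn.
rewrite -cats1; apply/cword_cat; exists (lab (u ++ p)).1; split; last first.
  by exists (ini (rcons (u ++ p) b)).1.
case: (lastP p) IH h1 h2 h3 heq => [|p' b'] IH h1 h2 h3 heq.
  by rewrite cats0.
have hmono := mono h1.
have hpre : node (rcons (u ++ p') b') by rewrite rcons_cat.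
have [h1' [_ h3']] := tree_child hpre.
have hm2 := mono h1'.
have heqlab : lab (u ++ rcons p' b') = ini (u ++ rcons p' b').
  case: (tree_class h1) => // [[u' [v' [_ [_ [_ [_ hl]]]]]]].
  exfalso; move: hmono hm2 h3 h3' heq; rewrite hl /= -rcons_cat => hmono hm2 h3 h3' heq.
  lia.
rewrite heqlab; apply: IH => //.
  by case: (p') => [|? ?].
by rewrite -heqlab -h3 heq.
Qed.

Lemma jump_exists v c : node (c ++ v) -> (lab c).2 < (lab (c ++ v)).2 ->
  exists p q, v = p ++ q /\ p <> [::] /\ node (c ++ p) /\
    (forall n, level le n (lab c).1 -> level le n (ini (c ++ p)).1) /\
    (forall n, level le n (ini (c ++ p)).1 -> level le n.+1 (lab (c ++ p)).1).
Proof.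
elim/last_ind: v => [|v a IH]; first by rewrite cats0 ltnn.
rewrite -rcons_cat => hn hlt; have [h1 [h2 h3]] := tree_child hn.
case: (ltnP (lab c).2 (lab (c ++ v)).2) => hcv.
  have [p [q [-> [hp [hnp [hd hj]]]]]] := IH h1 hcv.
  by exists p, (rcons q a); rewrite rcons_cat.
exists (rcons v a), [::]; rewrite cats0 -rcons_cat; split=> //.
split; first by case: (v).
split=> //; split.
  move=> n hl; apply: cstep_level h2 _; exact: path_dom h1 hl.
case: (tree_class hn) => [he|[u [w [he [hw [hss [h2u hlab]]]]]]].
  by exfalso; move: hlt; rewrite he h3; lia.
move=> n hl; rewrite hlab /=; apply: accel_jump => //.
have hnode : node (u ++ w) by rewrite -he.
have hpure : cword step le w (lab u).1 (ini (rcons (c ++ v) a)).1.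
  by rewrite he; apply: pure => //; rewrite -he.
have hid : is_ideal le (ini (rcons (c ++ v) a)).1 := cstep_ideal h2.
have [R [hR [_ hRs]]] := cword_ss hpure hid (proj1 hss).
by exists R; split=> //; apply: hRs.
Qed.

Hypothesis Hfin : finitely_many_levels le.

Lemma part1 c v : node c -> node (c ++ v) -> (lab c).1 = (lab (c ++ v)).1 ->
  (lab c).2 = (lab (c ++ v)).2.
Proof.
move=> hc hcv heq; have hm := mono hcv.
case: (ltnP (lab c).2 (lab (c ++ v)).2) => hlt; last by apply/eqP; rewrite eqn_leq hm hlt.
exfalso.
have [p [q [hv [hp [hnp [hd hj]]]]]] := jump_exists hcv hlt.
have hstep : forall n, level le n (lab c).1 -> level le n.+1 (lab c).1.
  move=> n hl; rewrite heq hv catA; apply: path_dom; first by rewrite -catA -hv.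
  exact: hj (hd _ hl).
have h0 : level le 0 (lab c).1.
  case: p hv hp hnp hd hj => [//|a p'] hv _ hnp _ _.
  have : node (rcons c a) by apply: (@tree_prefix p'); rewrite cat_rcons.
  by move=> /tree_child [_ [h _]]; exact: (proj1 h).
have hall : forall n, level le n (lab c).1 by elim=> // n IH; exact: hstep.
have [N hN] := Hfin; exact: hN _ (hall N).
Qed.

Lemma part2_step c d : aut_step node lab c d -> (lab c).2 <= (lab d).2.
Proof.
move=> [hc [hd [[a hda]|[_ [[v hv] heq]]]]].
  by subst d; have := @mono [:: a] c; rewrite cats1; apply.
rewrite hv in hc *; rewrite (@part1 d v) //; by rewrite -hv.
Qed.

End Aux.
Unset Implicit Arguments.


Theorem proposition25 (X : Type) (Sigma : finType) (step : Sigma -> X -> X -> Prop)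
    (le : X -> X -> Prop) (I0 : X -> Prop) (node : seq Sigma -> Prop)
    (ini lab : seq Sigma -> label X) :
  very_WSTS step le -> is_ideal le I0 -> IKM_tree step le I0 node ini lab ->
  (forall c v, node c -> node (c ++ v) -> (lab c).1 = (lab (c ++ v)).1 ->
      (lab c).2 = (lab (c ++ v)).2) /\
  (forall c d, node c -> clos_refl_trans _ (aut_step node lab) c d ->
      ((lab c).2 <= (lab d).2)%N).
Proof.
move=> [[[hqo _] _] [_ [hdet [_ [_ [hss hfin]]]]]] _ HT.
split.
  move=> c v hc hcv heq; exact: (part1 hqo hdet hss HT hfin hc hcv heq).
move=> c d _ h; elim: h => [x y hxy|x|x y z _ h1 _ h2].
- exact: (part2_step hqo hdet hss HT hfin hxy).
- exact: leqnn.
- exact: leq_trans h1 h2.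
Qed.
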